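(* Let $S,T>0$ and for $u\in C([0,S])$ define $(\mathcal{A}u)(s)=\int_0^1u(sr)\,dr$, $s\in[0,S]$. Suppose $U,V\in C^1([0,T],C([0,S]))$ satisfy: (i) $U(s,0)\ge V(s,0)$ for all $s\in[0,S]$; (ii) for all $(s,t)\in[0,S]\times[0,T]$, $$\partial_tU+U^2+U=2\mathcal{A}U+F,\qquad \partial_tV+V^2+V=2\mathcal{A}V+G,$$ where $F\ge G$. Then $U\ge V$ everywhere in $[0,S]\times[0,T]$. *)

(* Defs.v *)
From Stdlib Require Import Reals Lra.
From Coquelicot Require Import Coquelicot.
Open Scope R_scope.

Definition cont_on_0S (S : R) (u : R -> R) : Prop :=
  forall s, 0 <= s <= S -> forall eps, 0 < eps ->
    exists delta, 0 < delta /\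
      forall s', 0 <= s' <= S -> Rabs (s' - s) < delta -> Rabs (u s' - u s) < eps.

(* U : [0,T] -> C([0,S]) (written U t s) is C^1 with derivative dU, where
   C([0,S]) carries the sup norm:
   - U t and dU t lie in C([0,S]) for every t in [0,T];
   - the difference quotients converge to dU t uniformly in s (one-sided at
     the endpoints of [0,T]);
   - t |-> dU t is continuous into C([0,S]) (uniformly in s). *)
Definition C1_0T_C0S (S T : R) (U dU : R -> R -> R) : Prop :=
  (forall t, 0 <= t <= T -> cont_on_0S S (U t) /\ cont_on_0S S (dU t)) /\
  (forall t, 0 <= t <= T -> forall eps, 0 < eps ->
     exists delta, 0 < delta /\
       forall h, 0 <= t + h <= T -> h <> 0 -> Rabs h < delta ->
         forall s, 0 <= s <= S ->
           Rabs ((U (t + h) s - U t s) / h - dU t s) <= eps) /\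
  (forall t, 0 <= t <= T -> forall eps, 0 < eps ->
     exists delta, 0 < delta /\
       forall t', 0 <= t' <= T -> Rabs (t' - t) < delta ->
         forall s, 0 <= s <= S -> Rabs (dU t' s - dU t s) <= eps).

Definition avgA (u : R -> R) (s : R) : R := RInt (fun r => u (s * r)) 0 1.

(* Main.v *)
Require Import Defs.
From Stdlib Require Import Reals Lra Classical.
From Coquelicot Require Import Coquelicot.
Open Scope R_scope.

Lemma loc_glob (a b : R) (Q : R -> R -> Prop) :
  a <= b ->
  (forall x B B', B <= B' -> Q x B -> Q x B') ->
  (forall x, a <= x <= b -> exists d, 0 < d /\ exists B,
      forall y, a <= y <= b -> Rabs (y - x) < d -> Q y B) ->
  exists B, forall x, a <= x <= b -> Q x B.
Proof.
  intros hab mono loc.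
  set (E := fun tau => a <= tau <= b /\ exists B, forall x, a <= x <= tau -> Q x B).
  assert (Ea : E a).
  { split; [lra|]. destruct (loc a) as [d [hd [B HB]]]; [lra|].
    exists B. intros x hx. apply HB; [lra|]. replace (x - a) with 0 by lra.
    rewrite Rabs_R0; lra. }
  destruct (completeness E) as [sg [ub lub]].
  { exists b. intros t [ht _]. lra. }
  { exists a; exact Ea. }
  assert (hs1 : a <= sg) by (apply ub; exact Ea).
  assert (hs2 : sg <= b) by (apply lub; intros t [ht _]; lra).
  destruct (loc sg) as [d [hd [Bs HBs]]]; [lra|].
  assert (ex1 : exists tau, E tau /\ sg - d < tau).
  { apply NNPP; intro hn. assert (sg <= sg - d); [|lra].
    apply lub. intros t Et. apply Rnot_lt_le. intro. apply hn. exists t; auto. }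
  destruct ex1 as [tau [[htau [B1 HB1]] htd]].
  assert (Etp : E (Rmin b (sg + d/2))).
  { split. { unfold Rmin; destruct Rle_dec; lra. }
    exists (Rmax B1 Bs). intros x hx.
    destruct (Rle_dec x tau).
    - apply mono with B1; [apply Rmax_l|]. apply HB1; lra.
    - apply mono with Bs; [apply Rmax_r|]. apply HBs.
      + split; [lra|]. assert (Rmin b (sg + d/2) <= b) by apply Rmin_l. lra.
      + assert (Rmin b (sg + d/2) <= sg + d/2) by apply Rmin_r.
        apply Rabs_def1; lra. }
  assert (hle : Rmin b (sg + d/2) <= sg) by (apply ub; exact Etp).
  assert (hb : sg = b).
  { unfold Rmin in hle; destruct Rle_dec; lra. }
  destruct Etp as [_ [B HB]]. exists B. intros x hx. apply HB.
  unfold Rmin; destruct Rle_dec; lra.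
Qed.

Lemma cont_bounded S u : 0 <= S -> cont_on_0S S u ->
  exists B, forall x, 0 <= x <= S -> Rabs (u x) <= B.
Proof.
  intros hS hu.
  apply (loc_glob 0 S (fun x B => Rabs (u x) <= B)); auto.
  - intros; lra.
  - intros x hx. destruct (hu x hx 1 Rlt_0_1) as [d [hd Hd]].
    exists d; split; auto. exists (Rabs (u x) + 1). intros y hy hyx.
    specialize (Hd y hy hyx).
    pose proof (Rabs_triang_inv (u y) (u x)). lra.
Qed.

Lemma cont_pos_min S u : 0 <= S -> cont_on_0S S u ->
  (forall x, 0 <= x <= S -> 0 < u x) ->
  exists m, 0 < m /\ forall x, 0 <= x <= S -> m <= u x.
Proof.
  intros hS hu hpos.
  destruct (loc_glob 0 S (fun x B => 0 < B /\ 1 <= B * u x)) as [B HB]; auto.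
  - intros x B B' hBB [h1 h2]. split; [lra|].
    assert (0 < u x).
    { destruct (Rlt_le_dec 0 (u x)); auto. assert (B * u x <= 0); [|lra].
      rewrite <- (Rmult_0_r B). apply Rmult_le_compat_l; lra. }
    assert (B * u x <= B' * u x) by (apply Rmult_le_compat_r; lra). lra.
  - intros x hx. pose proof (hpos x hx) as px.
    destruct (hu x hx (u x / 2)) as [d [hd Hd]]; [lra|].
    exists d; split; auto. exists (2 / u x). intros y hy hyx.
    specialize (Hd y hy hyx). apply Rabs_def2 in Hd. split.
    + apply Rdiv_lt_0_compat; lra.
    + unfold Rdiv. apply Rmult_le_reg_l with (u x); [lra|].
      replace (u x * (2 * / u x * u y)) with (2 * u y) by (field; lra). lra.
  - assert (0 < B) by (destruct (HB 0); lra).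
    exists (/ B). split; [apply Rinv_0_lt_compat; lra|].
    intros x hx. destruct (HB x hx) as [_ h].
    apply Rmult_le_reg_l with B; [lra|]. rewrite Rinv_r; lra.
Qed.

Lemma C1_uc S T U dU : 0 <= S -> C1_0T_C0S S T U dU ->
  forall t, 0 <= t <= T -> forall eta, 0 < eta -> exists d, 0 < d /\
  forall t', 0 <= t' <= T -> Rabs (t' - t) < d -> forall s, 0 <= s <= S ->
    Rabs (U t' s - U t s) <= eta.
Proof.
  intros hS [h1 [h2 _]] t ht eta heta.
  destruct (cont_bounded S (dU t) hS (proj2 (h1 t ht))) as [Bd HBd].
  assert (0 <= Bd) by (specialize (HBd 0); pose proof (Rabs_pos (dU t 0)); lra).
  destruct (h2 t ht 1 Rlt_0_1) as [d0 [hd0 Hd0]].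
  exists (Rmin d0 (eta / (Bd + 1))). split.
  { apply Rmin_glb_lt; auto. apply Rdiv_lt_0_compat; lra. }
  intros t' ht' htt s hs.
  destruct (Req_dec t' t) as [e|ne].
  { subst. replace (U t s - U t s) with 0 by ring. rewrite Rabs_R0; lra. }
  assert (hh : t' - t <> 0) by lra.
  assert (Rabs (t'-t) < d0) by (pose proof (Rmin_l d0 (eta / (Bd + 1))); lra).
  assert (Rabs (t'-t) < eta / (Bd+1)) by (pose proof (Rmin_r d0 (eta / (Bd + 1))); lra).
  specialize (Hd0 (t'-t)). replace (t + (t'-t)) with t' in Hd0 by ring.
  specialize (Hd0 ht' hh H0 s hs). specialize (HBd s hs).
  set (q := (U t' s - U t s) / (t' - t)) in *.
  assert (Rabs q <= Bd + 1).
  { pose proof (Rabs_triang (q - dU t s) (dU t s)) as Htr.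
    replace (q - dU t s + dU t s) with q in Htr by ring. lra. }
  replace (U t' s - U t s) with (q * (t'-t)) by (unfold q; field; auto).
  rewrite Rabs_mult.
  apply Rle_trans with ((Bd+1) * Rabs (t'-t)).
  { apply Rmult_le_compat_r; auto. apply Rabs_pos. }
  apply Rmult_lt_compat_l with (r := Bd+1) in H1; [|lra].
  replace ((Bd + 1) * (eta / (Bd + 1))) with eta in H1 by (field; lra). lra.
Qed.

Lemma C1_bounded S T U dU : 0 <= S -> 0 <= T -> C1_0T_C0S S T U dU ->
  exists M, forall t s, 0 <= t <= T -> 0 <= s <= S -> Rabs (U t s) <= M.
Proof.
  intros hS hT hC.
  destruct (loc_glob 0 T (fun t B => forall s, 0 <= s <= S -> Rabs (U t s) <= B))
    as [B HB]; auto.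
  - intros x B B' hb h s hs. specialize (h s hs); lra.
  - intros t ht. destruct (cont_bounded S (U t) hS (proj1 (proj1 hC t ht))) as [B1 HB1].
    destruct (C1_uc S T U dU hS hC t ht 1 Rlt_0_1) as [d [hd Hd]].
    exists d; split; auto. exists (B1 + 1). intros y hy hyt s hs.
    specialize (Hd y hy hyt s hs). specialize (HB1 s hs).
    pose proof (Rabs_triang_inv (U y s) (U t s)). lra.
  - exists B. intros; auto.
Qed.

Lemma clamp_lip r r0 : Rabs (Rmax 0 (Rmin 1 r) - Rmax 0 (Rmin 1 r0)) <= Rabs (r - r0).
Proof.
  unfold Rmax, Rmin; repeat destruct Rle_dec; unfold Rabs; repeat destruct Rcase_abs; lra.
Qed.

Lemma ex_RInt_avg S u s : cont_on_0S S u -> 0 <= s <= S ->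
  ex_RInt (fun r => u (s * r)) 0 1.
Proof.
  intros hu hs.
  apply ex_RInt_ext with (f := fun r => u (s * Rmax 0 (Rmin 1 r))).
  { intros x hx. rewrite Rmin_left in hx by lra. rewrite Rmax_right in hx by lra.
    f_equal. f_equal. rewrite Rmin_right by lra. rewrite Rmax_right; lra. }
  apply (@ex_RInt_continuous R_CompleteNormedModule). intros z _.
  apply continuity_pt_filterlim.
  intros eps heps.
  set (c := Rmax 0 (Rmin 1 z)).
  assert (hc : 0 <= c <= 1) by (unfold c, Rmax, Rmin; repeat destruct Rle_dec; lra).
  assert (hsc : 0 <= s * c <= S) by (split; nra).
  destruct (hu (s * c) hsc eps heps) as [d [hd Hd]].
  exists (d / (s + 1)). split. { apply Rdiv_lt_0_compat; lra. }
  intros x [_ hx]. simpl in hx. unfold R_dist in *. simpl. unfold R_dist.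
  set (c' := Rmax 0 (Rmin 1 x)).
  assert (hc' : 0 <= c' <= 1) by (unfold c', Rmax, Rmin; repeat destruct Rle_dec; lra).
  apply Hd. { split; nra. }
  replace (s * c' - s * c) with (s * (c' - c)) by ring.
  rewrite Rabs_mult. rewrite (Rabs_right s) by lra.
  pose proof (clamp_lip x z). fold c c' in H.
  apply Rle_lt_trans with (s * Rabs (x - z)). { apply Rmult_le_compat_l; lra. }
  apply Rmult_lt_compat_l with (r := s+1) in hx; [|lra].
  replace ((s + 1) * (d / (s + 1))) with d in hx by (field; lra).
  pose proof (Rabs_pos (x - z)). nra.
Qed.

Lemma exp_der eps L t : derivable_pt_lim (fun x => eps * exp (L * x)) t (eps * (L * exp (L * t))).
Proof.
  apply is_derive_Reals. auto_derive; auto. ring.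
Qed.

Lemma exp_uc eps L t eta : 0 < eta -> exists d, 0 < d /\ forall t',
  Rabs (t' - t) < d -> Rabs (eps * exp (L * t') - eps * exp (L * t)) <= eta.
Proof.
  intros he.
  assert (hc : continuity_pt (fun x => eps * exp (L * x)) t).
  { apply derivable_continuous_pt. exists (eps * (L * exp (L * t))). apply exp_der. }
  destruct (hc eta he) as [d [hd Hd]]. exists d; split; auto.
  intros t' ht'. destruct (Req_dec t' t) as [e|ne].
  { subst. replace (_ - _) with 0 by ring. rewrite Rabs_R0; lra. }
  left. apply (Hd t'). split. { split; [exact I|auto]. } simpl. unfold R_dist. auto.
Qed.

Lemma absle x a : Rabs x <= a -> -a <= x <= a.
Proof. unfold Rabs; destruct Rcase_abs; lra. Qed.

Theorem proposition6p1 (S T : R) (U dU V dV F G : R -> R -> R) :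
  0 < S -> 0 < T ->
  C1_0T_C0S S T U dU -> C1_0T_C0S S T V dV ->
  (forall s, 0 <= s <= S -> U 0 s >= V 0 s) ->
  (forall s t, 0 <= s <= S -> 0 <= t <= T ->
     dU t s + (U t s) ^ 2 + U t s = 2 * avgA (U t) s + F t s) ->
  (forall s t, 0 <= s <= S -> 0 <= t <= T ->
     dV t s + (V t s) ^ 2 + V t s = 2 * avgA (V t) s + G t s) ->
  (forall s t, 0 <= s <= S -> 0 <= t <= T -> F t s >= G t s) ->
  forall s t, 0 <= s <= S -> 0 <= t <= T -> U t s >= V t s.
Proof.
  intros hS hT hU hV h0 eU eV hFG.
  destruct (C1_bounded S T U dU) as [MU HMU]; try lra; auto.
  destruct (C1_bounded S T V dV) as [MV HMV]; try lra; auto.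
  assert (0 <= MU) by (specialize (HMU 0 0); pose proof (Rabs_pos (U 0 0)); lra).
  assert (0 <= MV) by (specialize (HMV 0 0); pose proof (Rabs_pos (V 0 0)); lra).
  set (L := 2 * (MU + MV) + 2).
  assert (key : forall eps, 0 < eps -> forall t s, 0 <= t <= T -> 0 <= s <= S ->
     0 < U t s - V t s + eps * exp (L * t)).
  { intros eps heps.
    set (P := fun t s => U t s - V t s + eps * exp (L * t)).
    change (forall t s, 0 <= t <= T -> 0 <= s <= S -> 0 < P t s).
    set (Good := fun tau => 0 <= tau <= T /\
       forall t, 0 <= t <= tau -> forall s, 0 <= s <= S -> 0 < P t s).
    assert (P0 : forall s, 0 <= s <= S -> eps <= P 0 s).
    { intros s hs. unfold P. rewrite Rmult_0_r, exp_0. specialize (h0 s hs). lra. }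
    assert (G0 : Good 0).
    { split; [lra|]. intros t ht s hs. replace t with 0 by lra. specialize (P0 s hs); lra. }
    destruct (completeness Good) as [sg [ub lub]].
    { exists T. intros t [ht _]. lra. }
    { exists 0; exact G0. }
    assert (hs1 : 0 <= sg) by (apply ub; exact G0).
    assert (hs2 : sg <= T) by (apply lub; intros t [ht _]; lra).
    assert (claimA : forall t, 0 <= t < sg -> forall s, 0 <= s <= S -> 0 < P t s).
    { intros t ht s hs. destruct (classic (exists tau, Good tau /\ t <= tau)) as [[tau [[_ Gt] htau]]|hn].
      - apply Gt; auto; lra.
      - assert (sg <= t); [|lra]. apply lub. intros x Gx. apply Rnot_lt_le. intro.
        apply hn. exists x. split; auto; lra. }
    assert (PUC : forall t, 0 <= t <= T -> forall eta, 0 < eta -> exists d, 0 < d /\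
      forall t', 0 <= t' <= T -> Rabs (t' - t) < d -> forall s, 0 <= s <= S ->
      Rabs (P t' s - P t s) <= eta).
    { intros t ht eta heta.
      destruct (C1_uc S T U dU ltac:(lra) hU t ht (eta/3)) as [d1 [hd1 Hd1]]; [lra|].
      destruct (C1_uc S T V dV ltac:(lra) hV t ht (eta/3)) as [d2 [hd2 Hd2]]; [lra|].
      destruct (exp_uc eps L t (eta/3)) as [d3 [hd3 Hd3]]; [lra|].
      exists (Rmin d1 (Rmin d2 d3)). split.
      { repeat apply Rmin_glb_lt; auto. }
      intros t' ht' htt s hs.
      pose proof (Rmin_l d1 (Rmin d2 d3)). pose proof (Rmin_r d1 (Rmin d2 d3)).
      pose proof (Rmin_l d2 d3). pose proof (Rmin_r d2 d3).
      specialize (Hd1 t' ht' ltac:(lra) s hs). specialize (Hd2 t' ht' ltac:(lra) s hs).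
      specialize (Hd3 t' ltac:(lra)). unfold P.
      replace (U t' s - V t' s + eps * exp (L * t') - (U t s - V t s + eps * exp (L * t)))
        with ((U t' s - U t s) - (V t' s - V t s) + (eps * exp (L * t') - eps * exp (L * t))) by ring.
      eapply Rle_trans. apply Rabs_triang.
      eapply Rle_trans. apply Rplus_le_compat_r. apply Rabs_triang.
      rewrite Rabs_Ropp. lra. }
    assert (claimB : forall s, 0 <= s <= S -> 0 <= P sg s).
    { intros s hs. apply Rnot_lt_le. intro hneg.
      destruct (Req_dec sg 0) as [e|ne].
      { rewrite e in hneg. specialize (P0 s hs). lra. }
      destruct (PUC sg (conj hs1 hs2) (- P sg s / 2)) as [d [hd Hd]]; [lra|].
      set (t := sg - Rmin d sg / 2).
      pose proof (Rmin_l d sg). pose proof (Rmin_r d sg).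
      assert (0 < Rmin d sg) by (apply Rmin_glb_lt; lra).
      specialize (Hd t ltac:(unfold t; lra)).
      assert (Rabs (t - sg) < d) by (unfold t; apply Rabs_def1; lra).
      specialize (Hd H4 s hs). apply absle in Hd.
      assert (0 < P t s) by (apply claimA; auto; unfold t; lra). lra. }
    destruct (classic (forall s, 0 <= s <= S -> 0 < P sg s)) as [allpos|notall].
    - destruct (cont_pos_min S (P sg)) as [m [hm Hm]]; [lra| |auto|].
      { destruct hU as [hU1 _]. destruct hV as [hV1 _].
        destruct (hU1 sg (conj hs1 hs2)) as [cu _]. destruct (hV1 sg (conj hs1 hs2)) as [cv _].
        intros x hx e he. destruct (cu x hx (e/2)) as [d1 [hd1 Hd1]]; [lra|].
        destruct (cv x hx (e/2)) as [d2 [hd2 Hd2]]; [lra|].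
        exists (Rmin d1 d2). split; [apply Rmin_glb_lt; auto|].
        intros y hy hyx. pose proof (Rmin_l d1 d2). pose proof (Rmin_r d1 d2).
        specialize (Hd1 y hy ltac:(lra)). specialize (Hd2 y hy ltac:(lra)).
        unfold P.
        replace (U sg y - V sg y + eps * exp (L * sg) - (U sg x - V sg x + eps * exp (L * sg)))
          with ((U sg y - U sg x) - (V sg y - V sg x)) by ring.
        eapply Rle_lt_trans. apply Rabs_triang. rewrite Rabs_Ropp. lra. }
      destruct (PUC sg (conj hs1 hs2) (m/2)) as [d [hd Hd]]; [lra|].
      set (tau := Rmin T (sg + d/2)).
      assert (Gt : Good tau).
      { split. { unfold tau, Rmin; destruct Rle_dec; lra. }
        intros t ht s hs. destruct (Rlt_le_dec t sg).
        - apply claimA; auto; lra.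
        - assert (tau <= T) by apply Rmin_l. assert (tau <= sg + d/2) by apply Rmin_r.
          specialize (Hd t ltac:(lra) ltac:(apply Rabs_def1; lra) s hs).
          apply absle in Hd. specialize (Hm s hs). lra. }
      assert (tau <= sg) by (apply ub; exact Gt).
      assert (eT : tau = T).
      { unfold tau in *. unfold Rmin in *; destruct Rle_dec; lra. }
      rewrite eT in Gt. intros t s ht hs. apply (proj2 Gt); auto.
    - exfalso.
      apply not_all_ex_not in notall. destruct notall as [s0 hs0].
      apply imply_to_and in hs0. destruct hs0 as [hs0 hn].
      assert (Pz : P sg s0 = 0) by (pose proof (claimB s0 hs0); lra).
      assert (sgpos : 0 < sg).
      { destruct (Req_dec sg 0) as [e|ne]; [|lra]. rewrite e in Pz. specialize (P0 s0 hs0). lra. }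
      set (E := eps * exp (L * sg)).
      assert (hE : 0 < E) by (unfold E; apply Rmult_lt_0_compat; auto; apply exp_pos).
      assert (hW : forall s, 0 <= s <= S -> - E <= U sg s - V sg s).
      { intros s hs. pose proof (claimB s hs). unfold P in H1. fold E in H1. lra. }
      assert (hW0 : U sg s0 - V sg s0 = - E) by (unfold P in Pz; fold E in Pz; lra).
      assert (hA : - E <= avgA (U sg) s0 - avgA (V sg) s0).
      { unfold avgA.
        assert (ex1 := ex_RInt_avg S (U sg) s0 (proj1 (proj1 hU sg (conj hs1 hs2))) hs0).
        assert (ex2 := ex_RInt_avg S (V sg) s0 (proj1 (proj1 hV sg (conj hs1 hs2))) hs0).
        assert (RInt (fun r => U sg (s0 * r)) 0 1 - RInt (fun r => V sg (s0 * r)) 0 1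
                = RInt (fun r => U sg (s0 * r) - V sg (s0 * r)) 0 1) as ->.
        { symmetry. apply (@RInt_minus R_CompleteNormedModule); auto. }
        replace (- E) with (RInt (fun _ => - E) 0 1).
        2:{ rewrite RInt_const. unfold scal; simpl. unfold mult; simpl. ring. }
        apply RInt_le; [lra| apply ex_RInt_const | |].
        { apply (@ex_RInt_minus R_NormedModule); auto. }
        intros r hr. apply hW. split; nra. }
      assert (hd : (U sg s0 + V sg s0 - 1) * E <= dU sg s0 - dV sg s0).
      { specialize (eU s0 sg hs0 (conj hs1 hs2)). specialize (eV s0 sg hs0 (conj hs1 hs2)).
        specialize (hFG s0 sg hs0 (conj hs1 hs2)).
        assert (Hq : U sg s0 ^ 2 - V sg s0 ^ 2 = (U sg s0 + V sg s0) * (U sg s0 - V sg s0)) by ring.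
        rewrite hW0 in Hq. lra. }
      set (D := dU sg s0 - dV sg s0 + eps * (L * exp (L * sg))).
      assert (hD : 0 < D).
      { unfold D. specialize (HMU sg s0 (conj hs1 hs2) hs0). specialize (HMV sg s0 (conj hs1 hs2) hs0).
        apply absle in HMU. apply absle in HMV.
        replace (eps * (L * exp (L * sg))) with (L * E) by (unfold E; ring).
        assert (0 < (U sg s0 + V sg s0 - 1 + L) * E).
        { apply Rmult_lt_0_compat; auto. unfold L; lra. }
        lra. }
      destruct hU as [_ [dU' _]]. destruct hV as [_ [dV' _]].
      destruct (dU' sg (conj hs1 hs2) (D/4)) as [d1 [hd1 Hd1]]; [lra|].
      destruct (dV' sg (conj hs1 hs2) (D/4)) as [d2 [hd2 Hd2]]; [lra|].
      destruct (exp_der eps L sg (D/4)) as [d3 Hd3]; [lra|].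
      set (h := - Rmin (Rmin d1 d2) (Rmin d3 sg) / 2).
      pose proof (Rmin_l (Rmin d1 d2) (Rmin d3 sg)). pose proof (Rmin_r (Rmin d1 d2) (Rmin d3 sg)).
      pose proof (Rmin_l d1 d2). pose proof (Rmin_r d1 d2).
      pose proof (Rmin_l d3 sg). pose proof (Rmin_r d3 sg). pose proof (cond_pos d3).
      assert (0 < Rmin (Rmin d1 d2) (Rmin d3 sg)) by (repeat apply Rmin_glb_lt; lra).
      assert (hh : h < 0) by (unfold h; lra).
      assert (hh0 : h <> 0) by lra.
      assert (hah : Rabs h = - h) by (apply Rabs_left; lra).
      assert (hr : 0 <= sg + h <= T) by (unfold h; lra).
      specialize (Hd1 h hr hh0 ltac:(rewrite hah; unfold h; lra) s0 hs0).
      specialize (Hd2 h hr hh0 ltac:(rewrite hah; unfold h; lra) s0 hs0).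
      specialize (Hd3 h hh0 ltac:(rewrite hah; unfold h; lra)).
      apply absle in Hd1. apply absle in Hd2. apply Rabs_def2 in Hd3.
      assert (hpos : 0 < P (sg + h) s0) by (apply claimA; auto; unfold h; lra).
      set (qU := (U (sg + h) s0 - U sg s0) / h) in *.
      set (qV := (V (sg + h) s0 - V sg s0) / h) in *.
      set (qE := (eps * exp (L * (sg + h)) - eps * exp (L * sg)) / h) in *.
      assert (hq : 0 < qU - qV + qE) by (unfold D in *; lra).
      assert (hq2 : (qU - qV + qE) * h = P (sg + h) s0 - P sg s0).
      { unfold qU, qV, qE, P. field. auto. }
      assert ((qU - qV + qE) * h < 0).
      { rewrite <- (Rmult_0_l h). apply Rmult_lt_compat_r with (r := -h) in hq; lra. }
      lra. }
  intros s t hs ht. apply Rnot_lt_ge. intro hlt.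
  set (w := V t s - U t s).
  assert (0 < w) by (unfold w; lra).
  pose proof (exp_pos (L * t)).
  specialize (key (w / (2 * exp (L * t)))).
  assert (0 < w / (2 * exp (L * t))) by (apply Rdiv_lt_0_compat; lra).
  specialize (key H3 t s ht hs).
  replace (w / (2 * exp (L * t)) * exp (L * t)) with (w / 2) in key by (field; lra).
  unfold w in key. lra.
Qed.
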